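(* Let $\mathcal{X}$ be an input space with metric $d$, let $\Theta$ be a parameter (hypothesis) space with metric $d$, and let $\mathcal{Y}$ be an output space which is a normed vector space with norm $\|\cdot\|$. Let $f:\mathcal{X}\times\Theta\to\mathcal{Y}$, $(x,\theta)\mapsto f(x;\theta)$, be a parameterized family of hypotheses, let $\theta^*\in\Theta$ and set $f^*(x)=f(x;\theta^* )$. Let $\mathcal{L}:\mathcal{Y}\times\mathcal{X}\to\mathbb{R}$ be a loss function, and for a probability distribution $r$ on $\mathcal{X}$ define the error $e(\theta,r)=\mathbb{E}_{x\sim r}[\mathcal{L}(f(x;\theta),x)]$. Let $p$ (test distribution) and $q$ (training distribution) be probability distributions on $\mathcal{X}$, let $W(p,q)$ be their 1-Wasserstein distance with respect to $d$, and let $\Theta_q=\{\theta\in\Theta : e(\theta,q)=0\}$. Let $\theta$ be a random variable with some probability distribution on $\Theta$ such that $\mathbb{P}(\theta\in\Theta_q)>0$, and for $\varepsilon>0$ define the inductive bias complexity $$\tilde I=-\log \mathbb{P}\big(e(\theta,p)\le\varepsilon \mid e(\theta,q)=0\big).$$ Suppose that: (i) $\mathcal{L}(y,x)\ge 0$ for all $y,x$, with equality if and only if $y=f^*(x)$; (ii) $\mathcal{L}(y+f^*(x_2)-f^*(x_1),x_2)=\mathcal{L}(y,x_1)$ for all $y\in\mathcal{Y}$, $x_1,x_2\in\mathcal{X}$; (iii) there is a constant $L_{\mathcal{L}}$ with $\mathcal{L}(y+\delta,x)-\mathcal{L}(y,x)\le L_{\mathcal{L}}\|\delta\|$ for all $y,\delta\in\mathcal{Y}$,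 $x\in\mathcal{X}$; (iv) there is a constant $L_f$ with $\|f(x_1;\theta_1)-f(x_1;\theta_2)-f(x_2;\theta_1)+f(x_2;\theta_2)\|\le L_f\, d(x_1,x_2)\, d(\theta_1,\theta_2)$ for all $x_1,x_2\in\mathcal{X}$, $\theta_1,\theta_2\in\Theta$. Then $$\tilde I\le -\log \mathbb{P}\left(d(\theta,\theta^* )\le \frac{\varepsilon}{L_{\mathcal{L}}L_f W(p,q)} \;\middle|\; \theta\in\Theta_q\right).$$
   Context: The ratio $\varepsilon/(L_{\mathcal{L}}L_fW(p,q))$ is interpreted as $+\infty$ if its denominator is $0$. All expectations are assumed to exist. $\log$ denotes the logarithm (any fixed base). *)

(* Defs.v *)
From HB Require Import structures.
From mathcomp Require Import all_boot all_order all_algebra.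
From mathcomp Require Import all_classical all_reals all_analysis.
Set Implicit Arguments. Unset Strict Implicit. Unset Printing Implicit Defensive.
Import Order.TTheory GRing.Theory Num.Theory.
Import numFieldNormedType.Exports.
Local Open Scope classical_set_scope.
Local Open Scope ring_scope.

Definition is_metric {R : realType} {T : Type} (d : T -> T -> R) : Prop :=
  (forall x y, 0 <= d x y) /\
  (forall x y, d x y = 0 <-> x = y) /\
  (forall x y, d x y = d y x) /\
  (forall x y z, d x z <= d x y + d y z).

Definition err {R : realType} {dX} {X : measurableType dX} {Th Y : Type}
  (L : Y -> X -> R) (f : X -> Th -> Y) (t : Th) (r : probability X R) : \bar R :=
  (\int[r]_x (L (f x t) x)%:E)%E.

Definition coupling {R : realType} {dX} {X : measurableType dX}
  (p q : probability X R) (g : probability (X * X)%type R) : Prop :=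
  forall A : set X, measurable A ->
    g (A `*` setT) = p A /\ g (setT `*` A) = q A.

Definition wasserstein {R : realType} {dX} {X : measurableType dX}
  (d : X -> X -> R) (p q : probability X R) : \bar R :=
  ereal_inf [set (\int[g]_z (d z.1 z.2)%:E)%E | g in [set g | coupling p q g]].

Definition condprob {R : realType} {dT} {T : measurableType dT}
  (P : probability T R) (A B : set T) : R :=
  fine (P (A `&` B)) / fine (P B).

Definition neglog {R : realType} (b a : R) : \bar R :=
  if a == 0 then +oo%E else (- (ln a / ln b))%:E.

Definition ib_ratio {R : realType} (eps : R) (D : \bar R) : \bar R :=
  if D == 0%E then +oo%E else (eps%:E / D)%E.

(* Main.v *)
Require Import Defs.
From HB Require Import structures.
From mathcomp Require Import all_boot all_order all_algebra.
From mathcomp Require Import all_classical all_reals all_analysis.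
From mathcomp Require Import ring lra.
From mathcomp Require Import measurable_realfun.
Import Order.TTheory GRing.Theory Num.Theory.
Import numFieldNormedType.Exports.
Local Open Scope classical_set_scope.
Local Open Scope ring_scope.

Lemma marg1 {R : realType} {dX} {X : measurableType dX}
  (p q : probability X R) (g : probability (X * X)%type R) (h : X -> R) :
  coupling p q g -> measurable_fun setT h -> (forall x, 0 <= h x) ->
  (\int[g]_z (h z.1)%:E = \int[p]_x (h x)%:E)%E.
Proof.
move=> cg mh h0.
have -> : (\int[p]_x (h x)%:E = \int[pushforward g fst]_x (h x)%:E)%E.
  apply: eq_measure_integral => A mA _ /=.
  rewrite /pushforward -(cg A mA).1; congr (g _).
  by apply/seteqP; split=> -[a b]//= [].
rewrite ge0_integral_pushforward//; last first.
- by move=> y _; rewrite lee_fin.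
- exact/measurable_EFinP.
Qed.

Lemma marg2 {R : realType} {dX} {X : measurableType dX}
  (p q : probability X R) (g : probability (X * X)%type R) (h : X -> R) :
  coupling p q g -> measurable_fun setT h -> (forall x, 0 <= h x) ->
  (\int[g]_z (h z.2)%:E = \int[q]_x (h x)%:E)%E.
Proof.
move=> cg mh h0.
have -> : (\int[q]_x (h x)%:E = \int[pushforward g snd]_x (h x)%:E)%E.
  apply: eq_measure_integral => A mA _ /=.
  rewrite /pushforward -(cg A mA).2; congr (g _).
  by apply/seteqP; split=> -[a b]//= [].
rewrite ge0_integral_pushforward//; last first.
- by move=> y _; rewrite lee_fin.
- exact/measurable_EFinP.
Qed.
Lemma neglog_anti {R : realType} (b x y : R) : 1 < b -> 0 <= y -> y <= x ->
  (neglog b x <= neglog b y)%E.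
Proof.
move=> hb y0 yx; rewrite /neglog.
case: ifP => [/eqP x0|/negbT xn]; case: ifP => [/eqP y0'|/negbT yn] //.
- by move: yn; rewrite eq_le y0 andbT -x0 yx.
- exact: leey.
have yp : 0 < y by rewrite lt_def yn y0.
have xp : 0 < x by exact: lt_le_trans yx.
rewrite lee_fin lerN2 ler_pM2r ?invr_gt0 ?ln_gt0 //.
by rewrite ler_ln ?posrE.
Qed.

Theorem theorem1 (R : realType)
  (dX : measure_display) (X : measurableType dX)
  (dT : measure_display) (Th : measurableType dT)
  (Y : normedModType R)
  (dx : X -> X -> R) (dth : Th -> Th -> R)
  (f : X -> Th -> Y) (thstar : Th) (L : Y -> X -> R)
  (p q : probability X R) (P : probability Th R)
  (b eps LL Lf : R)
  (hb : 1 < b) (heps : 0 < eps)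
  (hdx : is_metric dx) (hdth : is_metric dth)
  (hdx_meas : measurable_fun setT (fun z : X * X => dx z.1 z.2))
  (hL_meas : forall t, measurable_fun setT (fun x => L (f x t) x))
  (hmeas_q : measurable [set t | err L f t q = 0%E])
  (hmeas_p : measurable [set t | (err L f t p <= eps%:E)%E])
  (hmeas_ball : measurable [set t | ((dth t thstar)%:E <=
        ib_ratio eps ((LL * Lf)%:E * wasserstein dx p q))%E])
  (hPq : (0 < P [set t | err L f t q = 0%E])%E)
  (h1 : forall y x, 0 <= L y x /\ (L y x = 0 <-> y = f x thstar))
  (h2 : forall y x1 x2, L (y + f x2 thstar - f x1 thstar) x2 = L y x1)
  (h3 : forall (y delta : Y) x, L (y + delta) x - L y x <= LL * `|delta|)
  (h4 : forall x1 x2 t1 t2,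
      `|f x1 t1 - f x1 t2 - f x2 t1 + f x2 t2| <= Lf * dx x1 x2 * dth t1 t2) :
  (neglog b (condprob P [set t | (err L f t p <= eps%:E)%E]
                      [set t | err L f t q = 0%E])
   <= neglog b (condprob P [set t | ((dth t thstar)%:E <=
                            ib_ratio eps ((LL * Lf)%:E * wasserstein dx p q))%E]
                         [set t | err L f t q = 0%E]))%E.
Proof.
have dx0 : forall x y, 0 <= dx x y by move=> x y; exact: hdx.1.
have dth0 : forall x y, 0 <= dth x y by move=> x y; exact: hdth.1.
have L0 : forall y x, 0 <= L y x by move=> y x; exact: (h1 y x).1.
have pw : forall t x1 x2, L (f x1 t) x1 <=
    L (f x2 t) x2 + Num.max 0 (LL * Lf * dth t thstar) * dx x1 x2.
  move=> t x1 x2.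
  set d := f x1 t - f x1 thstar - f x2 t + f x2 thstar.
  have e1 : f x2 t + d = f x1 t + f x2 thstar - f x1 thstar.
    rewrite /d addrC -!addrA; congr (_ + _).
    by rewrite (addrC (f x2 thstar)) addKr addrC.
  have := h3 (f x2 t) d x2; rewrite e1 h2 => H.
  have Hd := h4 x1 x2 t thstar.
  have : LL * `|d| <= Num.max 0 (LL * Lf * dth t thstar) * dx x1 x2.
    case: (leP 0 LL) => hLL.
    - apply: le_trans (ler_wpM2l hLL Hd) _.
      have -> : LL * (Lf * dx x1 x2 * dth t thstar) = LL * Lf * dth t thstar * dx x1 x2 by ring.
      by apply: ler_wpM2r => //; rewrite le_max lexx orbT.
    - apply: (@le_trans _ _ 0).
        by rewrite nmulr_rle0.
      by rewrite mulr_ge0 // le_max lexx.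
  move=> H2; lra.
have key : forall t, err L f t q = 0%E ->
    ((dth t thstar)%:E <= ib_ratio eps ((LL * Lf)%:E * wasserstein dx p q))%E ->
    (err L f t p <= eps%:E)%E.
  move=> t hq hball.
  pose L1 := fun x => L (f x t) x.
  have m1 : measurable_fun setT L1 := hL_meas t.
  have L10 : forall x, 0 <= L1 x by move=> x; exact: L0.
  have mE1 : measurable_fun setT (EFin \o L1)
    by exact/measurable_EFinP.
  set c := LL * Lf * dth t thstar.
  case: (leP c 0) => hc.
  - have pw' : forall x1 x2, L1 x1 <= L1 x2.
      move=> x1 x2; have := pw t x1 x2.
      by rewrite -/c (_ : Num.max 0 c = 0) ?mul0r ?addr0 //; apply/max_idPl.
    have le0 : forall x1, ((L1 x1)%:E <= 0)%E.
      move=> x1.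
      rewrite -[X in (X <= _)%E]mule1 -(probability_setT q) -integral_cst //.
      rewrite -hq /err; apply: ge0_le_integral => //.
      + by move=> x _; rewrite lee_fin.
      + by move=> x _; rewrite lee_fin; apply: pw'.
    apply: (@le_trans _ _ 0%E); last by rewrite lee_fin ltW.
    rewrite /err -(integral0 p setT); apply: ge0_le_integral => //.
    + by move=> x _; rewrite lee_fin.
    + by move=> x _; apply: le0.
  - have hmax : Num.max 0 c = c by apply/max_idPr; exact: ltW.
    have mdx : measurable_fun setT (EFin \o (fun z : X * X => dx z.1 z.2))
      by exact/measurable_EFinP.
    have cW : forall g, coupling p q g ->
        (err L f t p <= c%:E * \int[g]_z (dx z.1 z.2)%:E)%E.
      move=> g cg.
      rewrite /err -(marg1 p q g L1 cg m1 L10).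
      have mL2 : measurable_fun setT (fun z : X * X => L1 z.2)
        by apply: measurableT_comp => //; exact: measurable_snd.
      have mL1 : measurable_fun setT (fun z : X * X => L1 z.1)
        by apply: measurableT_comp => //; exact: measurable_fst.
      apply: (@le_trans _ _ (\int[g]_z ((L1 z.2)%:E + (c%:E * (dx z.1 z.2)%:E)))%E).
        apply: ge0_le_integral => //.
        + by move=> z _; rewrite lee_fin.
        + by exact/measurable_EFinP.
        + apply: emeasurable_funD; first exact/measurable_EFinP.
          apply: emeasurable_funM => //; exact/measurable_EFinP.
        + move=> z _; rewrite -EFinM -EFinD lee_fin -hmax; exact: pw.
      rewrite ge0_integralD //.
      all: try (move=> z _; rewrite lee_fin //; fail).
      + rewrite (marg2 p q g L1 cg m1 L10).
        have -> : (\int[q]_x (L1 x)%:E = 0)%E by exact: hq.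
        rewrite add0e ge0_integralZl_EFin //; last exact: ltW.
        by move=> z _; rewrite lee_fin.
      + exact/measurable_EFinP.
      + by move=> z _; rewrite -EFinM lee_fin mulr_ge0 // ltW.
      + apply: emeasurable_funM => //; exact/measurable_EFinP.
    have W0 : (0 <= wasserstein dx p q)%E.
      apply: le_ereal_inf_tmp => _ [g cg <-]; apply: integral_ge0 => z _.
      by rewrite lee_fin.
    have Wlb : ((c^-1)%:E * err L f t p <= wasserstein dx p q)%E.
      by apply: le_ereal_inf_tmp => _ [g cg <-]; rewrite lee_pdivrMl //; exact: cW.
    have eW : (err L f t p <= c%:E * wasserstein dx p q)%E by rewrite -lee_pdivrMl.
    have dpos : 0 < dth t thstar.
      rewrite lt_def dth0 andbT; apply/eqP => h0; move: hc; rewrite /c h0 mulr0 ltxx.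
      by [].
    have LLf : 0 < LL * Lf by rewrite -(pmulr_lgt0 _ dpos).
    move: hball eW W0; case: (wasserstein dx p q) => [r| |] hball eW W0.
    + rewrite lee_fin in W0.
      case: (eqVneq r 0) => [r0|rn0].
      * move: eW; rewrite r0 mule0 => eW; apply: le_trans eW _; rewrite lee_fin ltW //.
      * have rp : 0 < r by rewrite lt_def rn0 W0.
        have Dp : 0 < LL * Lf * r by rewrite mulr_gt0.
        move: hball; rewrite /ib_ratio -EFinM eqe (gt_eqF Dp) inver (gt_eqF Dp).
        rewrite -EFinM lee_fin ler_pdivlMr // => hb'.
        apply: le_trans eW _; rewrite -EFinM lee_fin.
        by have -> : c * r = dth t thstar * (LL * Lf * r) by rewrite /c; ring.
    + move: hball; rewrite /ib_ratio gt0_muley ?lte_fin //= invey mule0 lee_fin.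
      by rewrite leNgt dpos.
    + by [].
set A := [set t | err L f t q = 0%E].
set Bp := [set t | (err L f t p <= eps%:E)%E].
set Bb := [set t | ((dth t thstar)%:E <=
        ib_ratio eps ((LL * Lf)%:E * wasserstein dx p q))%E].
have sub : Bb `&` A `<=` Bp `&` A.
  by move=> t [hb' hq]; split => //; exact: key.
have le1 : (P (Bb `&` A) <= P (Bp `&` A))%E.
  by apply: le_measure => //; rewrite inE; exact: measurableI.
have fin : forall S, measurable S -> P S \is a fin_num.
  by move=> S mS; exact: fin_num_measure.
have hA : 0 < fine (P A).
  apply: fine_gt0; rewrite hPq /=.
  exact: (le_lt_trans (probability_le1 _ _) (ltry _)).
have a12 : condprob P Bb A <= condprob P Bp A.
  rewrite /condprob; apply: ler_wpM2r; first by rewrite invr_ge0 ltW.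
  apply: fine_le => //; rewrite ?inE; apply: fin; exact: measurableI.
have a20 : 0 <= condprob P Bb A.
  exact: divr_ge0 (fine_ge0 (measure_ge0 _ _)) (ltW hA).
exact: neglog_anti.
Qed.
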